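(* Let $t$ be a closed $\lambda$-term. If there is a derivation $\pi\triangleright\ \vdash^{(m,e)} t : L$ (with empty type context) in the silly multi type system, then there are an abstraction $v$ and a reduction sequence $d: t\to_{\beta_v}^* v$ with $|d|\leq m$.
   Context: $\lambda$-terms $t ::= x\mid\lambda x.t\mid tu$; values are abstractions. CbV contexts $V ::= \langle\cdot\rangle\mid tV\mid Vt$; root rule $(\lambda x.t)v\mapsto_{\beta_v} t\{x:=v\}$ for $v$ a value (capture-avoiding meta-level substitution); $\to_{\beta_v}$ is its closure under CbV contexts; $|d|$ is the length of $d$. Silly multi types: linear types $L ::= \mathtt{n} \mid M\multimap L$; multi types $M ::= [L_i]_{i\in I}$ finite multisets ($\mathbf{0}$ empty, $\uplus$ sum). Type contexts $\Gamma$ map variables to multi types with finite support; $\uplus$ pointwise; $\Gamma\setminus\!\!\setminus x$ sets $x$ to $\mathbf{0}$. Rules: (ax) $x:[L]\vdash^{(0,1)} x:L$; (many) from $(\Gamma_i\vdash^{(m_i,e_i)} t : L_i)_{i\in I}$, $I$ finite possibly empty, infer $\uplus_i\Gamma_i\vdash^{(\sum m_i,\sum e_i)} t : [L_i]_{i\in I}$; ($\mathrm{ax}_\lambda$) $\vdash^{(0,0)}\lambda x.t:\mathtt{n}$; ($\lambda$) from $\Gamma\vdash^{(m,e)}t:L$ infer $\Gamma\setminus\!\!\setminus x\vdash^{(m,e)}\lambda x.t:\Gamma(x)\multimap L$; (@) from $\Gamma\vdash^{(m,e)} t : M\multimap L$ and $\Delta\vdash^{(m',e')} u : M\uplus[\mathtt{n}]$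 infer $\Gamma\uplus\Delta\vdash^{(m+m'+1,e+e')} tu : L$. (There is also a rule for explicit substitutions, irrelevant for $\lambda$-terms.) *)

(* Defs.v *)
From Stdlib Require Import List Arith Permutation.
Import ListNotations.

Inductive term : Type :=
| Var : nat -> term
| Lam : term -> term
| App : term -> term -> term.

Definition is_value (t : term) : Prop :=
  match t with Lam _ => True | _ => False end.

Fixpoint closed_at (k : nat) (t : term) : Prop :=
  match t with
  | Var n => n < k
  | Lam b => closed_at (S k) b
  | App a b => closed_at k a /\ closed_at k b
  end.

Definition closed (t : term) : Prop := closed_at 0 t.

Fixpoint lift (d c : nat) (t : term) : term :=
  match t with
  | Var n => if n <? c then Var n else Var (n + d)
  | Lam b => Lam (lift d (S c) b)
  | App a b => App (lift d c a) (lift d c b)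
  end.

Fixpoint subst (k : nat) (s : term) (t : term) : term :=
  match t with
  | Var n =>
      if n <? k then Var n
      else if n =? k then lift k 0 s
      else Var (n - 1)
  | Lam b => Lam (subst (S k) s b)
  | App a b => App (subst k s a) (subst k s b)
  end.

Definition beta_subst (t v : term) : term := subst 0 v t.

Inductive step_bv : term -> term -> Prop :=
| sbv_root : forall t v, is_value v -> step_bv (App (Lam t) v) (beta_subst t v)
| sbv_appR : forall t u u', step_bv u u' -> step_bv (App t u) (App t u')
| sbv_appL : forall t t' u, step_bv t t' -> step_bv (App t u) (App t' u).

(* reduction sequences with their length: steps n t u  <->  d : t ->*_{bv} u, |d| = n *)
Inductive steps : nat -> term -> term -> Prop :=
| steps_refl : forall t, steps 0 t t
| steps_cons : forall n t u w, step_bv t u -> steps n u w -> steps (S n) t w.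

(* linear types L ::= n | M -o L ; multi types M are finite multisets,
   represented as lists taken up to permutation (see mt_equiv). *)
Inductive ltype : Type :=
| Tn : ltype
| Tarr : list ltype -> ltype -> ltype.

Definition mtype := list ltype.

Inductive lt_equiv : ltype -> ltype -> Prop :=
| lte_n : lt_equiv Tn Tn
| lte_arr : forall M M' M'' L L',
    Permutation M M'' -> Forall2 lt_equiv M'' M' -> lt_equiv L L' ->
    lt_equiv (Tarr M L) (Tarr M' L').

Definition mt_equiv (M M' : mtype) : Prop :=
  exists M'', Permutation M M'' /\ Forall2 lt_equiv M'' M'.

(* type contexts: variable (de Bruijn index) |-> multi type; finite support is
   automatic for the contexts built by the rules *)
Definition ctx := nat -> mtype.
Definition ctx_empty : ctx := fun _ => [].
Definition ctx_union (G D : ctx) : ctx := fun x => G x ++ D x.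
Definition ctx_single (x : nat) (M : mtype) : ctx :=
  fun y => if y =? x then M else [].
(* context below a binder: the bound variable 0 is removed (G \\ x) *)
Definition ctx_tail (G : ctx) : ctx := fun y => G (S y).

(* has_type G t L m e  :  G |-^(m,e) t : L
   has_mtype G t M m e :  G |-^(m,e) t : M  (rule many) *)
Inductive has_type : ctx -> term -> ltype -> nat -> nat -> Prop :=
| ty_ax : forall x L, has_type (ctx_single x [L]) (Var x) L 0 1
| ty_axlam : forall t, has_type ctx_empty (Lam t) Tn 0 0
| ty_lam : forall G t L m e,
    has_type G t L m e -> has_type (ctx_tail G) (Lam t) (Tarr (G 0) L) m e
| ty_app : forall G D t u M N L m e m' e',
    has_type G t (Tarr M L) m e ->
    has_mtype D u N m' e' ->
    mt_equiv N (M ++ [Tn]) ->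
    has_type (ctx_union G D) (App t u) L (m + m' + 1) (e + e')
with has_mtype : ctx -> term -> mtype -> nat -> nat -> Prop :=
| mty_nil : forall t, has_mtype ctx_empty t [] 0 0
| mty_cons : forall G D t L M m e m' e',
    has_type G t L m e -> has_mtype D t M m' e' ->
    has_mtype (ctx_union G D) t (L :: M) (m + m') (e + e').

Definition ctx_is_empty (G : ctx) : Prop := forall x, G x = [].

(* Main.v *)
Require Import Defs.
From Stdlib Require Import List Arith.
From Stdlib Require Import Lia Permutation.
Import ListNotations.

Fixpoint V (L : ltype) (v : term) (k : nat) {struct L} : Prop :=
  match L with
  | Tn => True
  | Tarr M L0 => exists b, v = Lam b /\ forall w j, is_value w -> closed w ->
      (fix VM (M : list ltype) (j : nat) : Prop :=
         match M with [] => True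
         | L1 :: M1 => exists j1 j2, j1 + j2 <= j /\ V L1 w j1 /\ VM M1 j2 end) M j ->
      exists z n k', steps n (beta_subst b w) z /\ is_value z /\ closed z /\ n + k' <= k + j /\ V L0 z k'
  end.

Definition VM (w : term) : list ltype -> nat -> Prop :=
  fix VM (M : list ltype) (j : nat) : Prop :=
         match M with [] => True
         | L1 :: M1 => exists j1 j2, j1 + j2 <= j /\ V L1 w j1 /\ VM M1 j2 end.

Definition E (L:ltype) (t:term) (k:nat) :=
  exists z n k', steps n t z /\ is_value z /\ closed z /\ n + k' <= k /\ V L z k'.

Lemma V_arr M L v k : V (Tarr M L) v k <-> exists b, v = Lam b /\ forall w j, is_value w -> closed w ->
  VM w M j -> E L (beta_subst b w) (k + j).
Proof. reflexivity. Qed.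

Lemma closed_at_mono t : forall k k', closed_at k t -> k <= k' -> closed_at k' t.
Proof. induction t; simpl; intros k k' H Hk; try lia. - eapply IHt; eauto; lia. - destruct H; split; eauto. Qed.

Lemma lift_closed t : forall d c, closed_at c t -> lift d c t = t.
Proof.
  induction t; simpl; intros d c H.
  - apply Nat.ltb_lt in H; now rewrite H.
  - now rewrite IHt.
  - destruct H; now rewrite IHt1, IHt2.
Qed.

Lemma subst_closed t : forall k s, closed_at k t -> subst k s t = t.
Proof.
  induction t; simpl; intros k s H.
  - apply Nat.ltb_lt in H; now rewrite H.
  - now rewrite IHt.
  - destruct H; now rewrite IHt1, IHt2.
Qed.

Lemma subst_closed_at t : forall n k s, closed_at (S n) t -> k <= n -> closed s -> closed_at n (subst k s t).
Proof.
  induction t; simpl; intros m k s H Hk Hs.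
  - destruct (Nat.ltb_spec n k); simpl; [lia|].
    destruct (Nat.eqb_spec n k); simpl.
    + rewrite lift_closed by exact Hs. eapply closed_at_mono; eauto; lia.
    + lia.
  - apply IHt; auto; lia.
  - destruct H; split; eauto.
Qed.

Lemma subst_comm t : forall k u w, closed u -> closed w ->
  subst k w (subst (S k) u t) = subst k u (subst k w t).
Proof.
  induction t; intros k u w Hu Hw; simpl.
  - destruct (Nat.ltb_spec n (S k)).
    + destruct (Nat.ltb_spec n k).
      * simpl. destruct (Nat.ltb_spec n k); [|lia]. reflexivity.
      * destruct (Nat.eqb_spec n k); [|lia]. simpl.
        destruct (Nat.ltb_spec n k); [lia|]. destruct (Nat.eqb_spec n k); [|lia].
        rewrite !lift_closed by auto. rewrite subst_closed; auto.
        eapply closed_at_mono; eauto; lia.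
    + destruct (Nat.eqb_spec n (S k)).
      * subst. destruct (Nat.ltb_spec (S k) k); [lia|]. destruct (Nat.eqb_spec (S k) k); [lia|].
        simpl. destruct (Nat.ltb_spec (k - 0) k); [lia|]. destruct (Nat.eqb_spec (k-0) k); [|lia].
        rewrite !lift_closed by auto. rewrite subst_closed; auto.
        eapply closed_at_mono; eauto; lia.
      * destruct (Nat.ltb_spec n k); [lia|]. destruct (Nat.eqb_spec n k); [lia|].
        simpl. destruct (Nat.ltb_spec (n-1) k); [lia|]. destruct (Nat.eqb_spec (n-1) k); [lia|].
        reflexivity.
  - now rewrite IHt.
  - now rewrite IHt1, IHt2.
Qed.

Fixpoint instk (k:nat) (rho : list term) (t:term) : term :=
  match rho with [] => t | w :: r => instk k r (subst k w t) end.

Lemma instk_lam rho : forall k b, instk k rho (Lam b) = Lam (instk (S k) rho b).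
Proof. induction rho; simpl; auto. Qed.
Lemma instk_app rho : forall k a b, instk k rho (App a b) = App (instk k rho a) (instk k rho b).
Proof. induction rho; simpl; auto. Qed.
Lemma instk_closed rho : forall k t, closed t -> instk k rho t = t.
Proof.
  induction rho; simpl; intros; auto. rewrite subst_closed; auto.
  eapply closed_at_mono; eauto; lia.
Qed.

Lemma inst_comm rho : forall k w b, closed w -> Forall closed rho ->
  subst k w (instk (S k) rho b) = instk k rho (subst k w b).
Proof.
  induction rho as [|u rho IH]; simpl; intros k w b Hw Hr; auto.
  inversion Hr; subst. rewrite IH by auto. now rewrite subst_comm.
Qed.

Lemma instk_closed_at rho : forall k t, closed_at (k + length rho) t -> Forall closed rho ->
  closed_at k (instk k rho t).
Proof.
  induction rho as [|u rho IH]; simpl; intros k t H Hr.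
  - now rewrite Nat.add_0_r in H.
  - inversion Hr; subst. apply IH; auto. apply subst_closed_at; auto; [|lia].
    now replace (S (k + length rho)) with (k + S (length rho)) by lia.
Qed.

Lemma steps_appL n t t' u : steps n t t' -> steps n (App t u) (App t' u).
Proof. induction 1; econstructor; eauto using step_bv. Qed.
Lemma steps_appR n t u u' : steps n u u' -> steps n (App t u) (App t u').
Proof. induction 1; econstructor; eauto using step_bv. Qed.
Lemma steps_trans n a b : steps n a b -> forall m c, steps m b c -> steps (n + m) a c.
Proof. induction 1; simpl; intros; eauto using steps. Qed.

Lemma value_nostep v u : is_value v -> ~ step_bv v u.
Proof. destruct v; simpl; try tauto. intros _ H; inversion H. Qed.

Lemma diamond t u1 : step_bv t u1 -> forall u2, step_bv t u2 ->
  u1 = u2 \/ exists z, step_bv u1 z /\ step_bv u2 z.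
Proof.
  induction 1; intros u2 H2; inversion H2; subst; auto.
  all: try (exfalso; match goal with
    | H : step_bv (Lam _) _ |- _ => inversion H
    | H : step_bv ?v _, Hv : is_value ?v |- _ => exact (value_nostep _ _ Hv H) end).
  all: try (destruct (IHstep_bv _ ltac:(eassumption)) as [->|[z [? ?]]]; [now auto|]).
  all: right; eauto using step_bv.
Qed.

Lemma steps_after n u w : steps n u w -> is_value w -> forall u', step_bv u u' -> steps (n - 1) u' w.
Proof.
  induction 1; intros Hw u' Hs.
  - exfalso; eapply value_nostep; eauto.
  - destruct (diamond _ _ H _ Hs) as [->|[z [H1 H2]]].
    + simpl; now rewrite Nat.sub_0_r.
    + specialize (IHsteps Hw _ H1). destruct n.
      * inversion H0; subst. exfalso; eapply value_nostep; eauto.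
      * simpl in *. rewrite Nat.sub_0_r in *. econstructor; eauto.
Qed.

Lemma steps_det n1 u w1 : steps n1 u w1 -> is_value w1 -> forall n2 w2, steps n2 u w2 -> is_value w2 ->
  n1 = n2 /\ w1 = w2.
Proof.
  induction 1; intros Hw1 n2 w2 H2 Hw2.
  - inversion H2; subst; [split; reflexivity|]. exfalso; eapply (value_nostep _ _ Hw1); eassumption.
  - inversion H2; subst.
    + exfalso; eapply (value_nostep _ _ Hw2); eassumption.
    + match goal with Hx : steps _ ?u2 w2, Hy : step_bv t ?u2 |- _ => pose proof (steps_after _ _ _ H2 Hw2 _ H) as Hs end. simpl in Hs. rewrite Nat.sub_0_r in Hs.
      destruct (IHsteps Hw1 _ _ Hs Hw2); subst; split; reflexivity.
Qed.

Fixpoint ltype_ind' (P : ltype -> Prop) (Hn : P Tn)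
  (Ha : forall M L, Forall P M -> P L -> P (Tarr M L)) (L : ltype) : P L :=
  match L with
  | Tn => Hn
  | Tarr M L0 => Ha M L0
      ((fix F (M : list ltype) : Forall P M :=
          match M with [] => Forall_nil P | x :: xs => Forall_cons x (ltype_ind' P Hn Ha x) (F xs) end) M)
      (ltype_ind' P Hn Ha L0)
  end.

Lemma VM_perm w M M' : Permutation M M' -> forall j, VM w M j -> VM w M' j.
Proof.
  induction 1; simpl; intros j HH; auto.
  - destruct HH as (j1 & j2 & ? & ? & ?). exists j1, j2; eauto.
  - destruct HH as (j1 & j2 & ? & ? & (j3 & j4 & ? & ? & ?)).
    exists j3, (j1 + j4); split; [lia|]. split; auto. exists j1, j4; split; [lia|]; auto.
Qed.

Lemma Forall2_VM w (P : ltype -> Prop) A B :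
  Forall2 lt_equiv A B ->
  Forall (fun L => forall L', lt_equiv L L' -> forall v k, V L v k <-> V L' v k) A ->
  forall j, (VM w A j -> VM w B j) /\ (VM w B j -> VM w A j).
Proof.
  induction 1 as [|x y A B Hxy Hf IH]; simpl; intros HA j; [tauto|].
  inversion HA as [|? ? Hx HA']; subst.
  split; intros (j1 & j2 & ? & H1 & H2); exists j1, j2; split; auto; split.
  - eapply Hx; eauto.
  - eapply IH; eauto.
  - eapply Hx; eauto.
  - eapply IH; eauto.
Qed.

Lemma V_equiv L : forall L', lt_equiv L L' -> forall v k, V L v k <-> V L' v k.
Proof.
  induction L as [|M L IHM IHL] using ltype_ind'; intros L' H;
    inversion H as [|? ? Mm ? ? Hp Hf Hl]; subst; [tauto|].
  assert (HM : Forall (fun L => forall L', lt_equiv L L' -> forall v k, V L v k <-> V L' v k) Mm).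
  { eapply Permutation_Forall; eauto. }
  assert (HVM : forall w j, VM w M j <-> VM w M' j).
  { intros w j. split; intro HH.
    - eapply VM_perm in HH; [|eauto]. exact (proj1 (Forall2_VM w (fun _ => True) Mm M' Hf HM j) HH).
    - apply (VM_perm w Mm M); [now apply Permutation_sym|].
      exact (proj2 (Forall2_VM w (fun _ => True) Mm M' Hf HM j) HH). }
  intros v k. rewrite !V_arr. unfold E.
  split; intros (b & -> & Hb); exists b; split; auto; intros w j Hw Hc HH;
  [apply HVM in HH | apply HVM in HH];
  destruct (Hb w j Hw Hc HH) as (z & n & k' & ? & ? & ? & ? & ?);
  exists z, n, k'; repeat split; auto; eapply IHL; eauto.
Qed.

Lemma VM_app w M1 M2 : forall j, VM w (M1 ++ M2) j -> exists j1 j2, j1 + j2 <= j /\ VM w M1 j1 /\ VM w M2 j2.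
Proof.
  induction M1; simpl; intros j H.
  - exists 0, j; simpl; auto.
  - destruct H as (j1 & j2 & ? & ? & H). destruct (IHM1 _ H) as (a1 & a2 & ? & ? & ?).
    exists (j1 + a1), a2; split; [lia|]; split; auto. exists j1, a1; split; [lia|]; auto.
Qed.

Lemma VM_mt_equiv w N M : mt_equiv N M -> forall j, VM w N j -> VM w M j.
Proof.
  intros (M'' & Hp & Hf) j HH. eapply VM_perm in HH; [|eauto]. clear Hp N.
  revert j HH; induction Hf as [|x y l l' Hxy Hf IH]; simpl; intros j HH; auto.
  destruct HH as (j1 & j2 & ? & ? & ?). exists j1, j2; split; auto. split.
  - eapply (proj1 (V_equiv x y Hxy w j1)); auto.
  - eauto.
Qed.

Fixpoint SC (G : ctx) (rho : list term) (c : nat) : Prop :=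
  match rho with
  | [] => forall x, G x = []
  | w :: r => exists j c', j + c' <= c /\ VM w (G 0) j /\ SC (ctx_tail G) r c'
  end.

Lemma SC_var rho : forall G c x L, SC G rho c -> G x = [L] -> Forall closed rho ->
  exists j, j <= c /\ V L (instk 0 rho (Var x)) j.
Proof.
  induction rho as [|w rho IH]; simpl; intros G c x L H Hx Hr.
  - rewrite H in Hx; discriminate.
  - inversion Hr; subst.
    destruct H as (j & c' & ? & HV & HS). destruct x.
    + rewrite Hx in HV. simpl in HV. destruct HV as (j1 & j2 & ? & ? & _).
      exists j1; split; [lia|]. simpl. rewrite lift_closed by auto. rewrite instk_closed; auto.
    + simpl. rewrite Nat.sub_0_r. destruct (IH _ _ _ _ HS Hx) as (j0 & ? & ?); auto.
      exists j0; split; [lia|auto].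
Qed.

Lemma SC_union rho : forall G D c, SC (ctx_union G D) rho c ->
  exists c1 c2, c1 + c2 <= c /\ SC G rho c1 /\ SC D rho c2.
Proof.
  induction rho as [|w rho IH]; simpl; intros G D c H.
  - exists 0, 0; split; [lia|]. split; intro x; specialize (H x); unfold ctx_union in H;
    apply app_eq_nil in H; tauto.
  - destruct H as (j & c' & ? & HV & HS).
    destruct (VM_app _ _ _ _ HV) as (j1 & j2 & ? & ? & ?).
    destruct (IH _ _ _ HS) as (c1 & c2 & ? & ? & ?).
    exists (j1 + c1), (j2 + c2); split; [lia|]. split.
    + exists j1, c1; auto.
    + exists j2, c2; auto.
Qed.

Lemma inst_var_in rho : forall x, x < length rho -> Forall closed rho -> In (instk 0 rho (Var x)) rho.
Proof.
  induction rho as [|w rho IH]; simpl; intros x Hx Hr; [lia|].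
  inversion Hr; subst. destruct x.
  - left. simpl. rewrite lift_closed by auto. rewrite instk_closed; auto.
  - right. simpl. rewrite Nat.sub_0_r. apply IH; auto; lia.
Qed.

Scheme has_type_mut := Induction for has_type Sort Prop
with has_mtype_mut := Induction for has_mtype Sort Prop.
Combined Scheme has_mut from has_type_mut, has_mtype_mut.

Definition EM (N : mtype) (t : term) (k : nat) :=
  exists z n k', steps n t z /\ is_value z /\ closed z /\ n + k' <= k /\ VM z N k'.

Definition cv (w : term) := is_value w /\ closed w.

Lemma mt_equiv_nonempty N M : mt_equiv N (M ++ [Tn]) -> N <> [].
Proof.
  intros (M'' & Hp & Hf) ->. apply Permutation_nil in Hp; subst.
  inversion Hf. destruct M; discriminate.
Qed.

Lemma fundamental :
  (forall G t L m e, has_type G t L m e -> forall rho c, Forall closed rho -> Forall is_value rho ->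
     closed_at (length rho) t -> SC G rho c -> E L (instk 0 rho t) (m + c)) /\
  (forall D u N m e, has_mtype D u N m e -> N <> [] -> forall rho c, Forall closed rho -> Forall is_value rho ->
     closed_at (length rho) u -> SC D rho c -> EM N (instk 0 rho u) (m + c)).
Proof.
  apply (has_mut
    (fun G t L m e _ => forall rho c, Forall closed rho -> Forall is_value rho ->
     closed_at (length rho) t -> SC G rho c -> E L (instk 0 rho t) (m + c))
    (fun D u N m e _ => N <> [] -> forall rho c, Forall closed rho -> Forall is_value rho ->
     closed_at (length rho) u -> SC D rho c -> EM N (instk 0 rho u) (m + c))).
  -
    intros x L rho c Hc Hv Hx HS.
    destruct (SC_var rho _ c x L HS ltac:(unfold ctx_single; now rewrite Nat.eqb_refl) Hc) as (j & ? & ?).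
    pose proof (inst_var_in rho x Hx Hc) as Hin.
    exists (instk 0 rho (Var x)), 0, j. refine (conj (steps_refl _) (conj _ (conj _ (conj _ _)))); auto; try lia.
    all: rewrite Forall_forall in Hv, Hc; auto.
  -
    intros t rho c Hc Hv Ht HS. rewrite instk_lam.
    exists (Lam (instk 1 rho t)), 0, 0. refine (conj (steps_refl _) (conj I (conj _ (conj _ I)))); [|lia].
    rewrite <- instk_lam. apply instk_closed_at; auto.
  -
    intros G t L m e Hty IH rho c Hc Hv Ht HS. rewrite instk_lam.
    exists (Lam (instk 1 rho t)), 0, (m + c). refine (conj (steps_refl _) (conj I (conj _ (conj (le_n _) _)))).
    + rewrite <- instk_lam. apply instk_closed_at; auto.
    + apply V_arr. exists (instk 1 rho t); split; auto.
      intros w j Hw Hcw HVM. unfold beta_subst. rewrite inst_comm by auto.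
      change (instk 0 rho (subst 0 w t)) with (instk 0 (w :: rho) t).
      replace (m + c + j) with (m + (j + c)) by lia.
      apply IH; simpl; auto. exists j, c; auto.
  -
    intros G D t u M N L m e m' e' Ht IHt Hu IHu Heq rho c Hc Hv [Hct Hcu] HS.
    destruct (SC_union _ _ _ _ HS) as (c1 & c2 & ? & HS1 & HS2).
    destruct (IHt rho c1 Hc Hv Hct HS1) as (f & n1 & k1 & Hs1 & Hvf & Hcf & ? & HVf).
    destruct (IHu (mt_equiv_nonempty _ _ Heq) rho c2 Hc Hv Hcu HS2) as (w & n2 & k2 & Hs2 & Hvw & Hcw & ? & HVw).
    apply (VM_mt_equiv _ _ _ Heq) in HVw. destruct (VM_app _ _ _ _ HVw) as (j1 & j2 & ? & HVM & _).
    apply V_arr in HVf. destruct HVf as (b & -> & Hb).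
    destruct (Hb w j1 Hvw Hcw HVM) as (z & n3 & k3 & Hs3 & ? & ? & ? & ?).
    exists z, (n1 + (n2 + S n3)), k3. repeat split; auto; [|lia].
    rewrite instk_app. eapply steps_trans; [apply steps_appL; eauto|].
    eapply steps_trans; [apply steps_appR; eauto|].
    econstructor; [apply sbv_root; auto|]. exact Hs3.
  -
    intros t Hn; now elim Hn.
  -
    intros G D t L M m e m' e' Ht IHt Hu IHu _ rho c Hc Hv Hct HS.
    destruct (SC_union _ _ _ _ HS) as (c1 & c2 & ? & HS1 & HS2).
    destruct (IHt rho c1 Hc Hv Hct HS1) as (z & n & k1 & Hs1 & Hvz & Hcz & ? & HVz).
    destruct M as [|L' M].
    + exists z, n, k1. repeat split; auto; [lia|]. simpl. exists k1, 0; split; [lia|auto].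
    + destruct (IHu ltac:(discriminate) rho c2 Hc Hv Hct HS2) as (z' & n' & k2 & Hs2 & Hvz' & Hcz' & ? & HVz').
      destruct (steps_det _ _ _ Hs1 Hvz _ _ Hs2 Hvz') as [<- <-].
      exists z, n, (k1 + k2). repeat split; auto; [lia|].
      exists k1, k2; split; [lia|auto].
Qed.

Theorem theorem7p2 :
  forall (t : term) (L : ltype) (m e : nat) (G : ctx),
    closed t ->
    ctx_is_empty G ->
    has_type G t L m e ->
    exists (v : term) (n : nat), is_value v /\ steps n t v /\ n <= m.
Proof.
  intros t L m e G Ht HG Hty.
  destruct (proj1 fundamental G t L m e Hty [] 0 (Forall_nil _) (Forall_nil _) Ht HG)
    as (z & n & k & Hs & Hv & _ & Hle & _).
  exists z, n. simpl in Hs. repeat split; auto. lia.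
Qed.
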